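(* The function $q$ satisfies $q(\alpha)\to0$ as $\alpha\to0^+$ and as $\alpha\to(\pi/2)^-$, and there is a unique $\alpha_0^*\in(0,\pi/2)$ (numerically $\alpha_0^*\approx1.391$) such that $q$ is strictly increasing on $(0,\alpha_0^*]$ and strictly decreasing on $[\alpha_0^*,\pi/2)$. Consequently, the Steiner drop system has exactly two equilibria when $\alpha_0\neq\alpha_0^*$ and exactly one equilibrium when $\alpha_0=\alpha_0^*$; when $\alpha_0<\alpha_0^*$ the equilibrium $(0,0,\tfrac13\sqrt{\tan\alpha_0},0)$ is the one with the smaller $y$-coordinate, and when $\alpha_0>\alpha_0^*$ it is the one with the larger $y$-coordinate.
   Context: Let $q(\alpha)=\dfrac{2\sin^2\alpha\,\sqrt{\tan\alpha}}{4+\sec\alpha}$ for $\alpha\in(0,\pi/2)$. Fix $\alpha_0\in(0,\pi/2)$. For $x\in\mathbb{R}$, $y>0$ define $a(x,y)=\sqrt{\left(\tfrac{1}{3y}-3x\right)^2+9y^2}$, $b(x,y)=\sqrt{\left(\tfrac{1}{3y}+3x\right)^2+9y^2}$, $f(x,y)=\frac{1}{a}\left(\frac{1}{3y}-3x\right)-\frac{1}{b}\left(\frac{1}{3y}+3x\right)$, $h(x,y)=-3y\left(\frac1a+\frac1b\right)+\frac{q(\alpha_0)}{3y}\left(\frac{2(a+b)}{3y}+ab\right)$. The Steiner drop system is the ODE on $\{(x,w,y,z)\in\mathbb{R}^4: y>0\}$: $\dot x=w,\ \dot w=f(x,y),\ \dot y=z,\ \dot z=h(x,y)$. *)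

(* Defs.v *)
From Stdlib Require Import Reals Lra.
Open Scope R_scope.

Definition q (al : R) : R :=
  2 * (sin al)^2 * sqrt (tan al) / (4 + / cos al).

Definition sa (x y : R) : R := sqrt ((/(3*y) - 3*x)^2 + 9*y^2).
Definition sb (x y : R) : R := sqrt ((/(3*y) + 3*x)^2 + 9*y^2).

Definition sf (x y : R) : R :=
  / sa x y * (/(3*y) - 3*x) - / sb x y * (/(3*y) + 3*x).

Definition sh (alpha0 x y : R) : R :=
  - 3*y * (/ sa x y + / sb x y)
  + q alpha0 / (3*y) * (2 * (sa x y + sb x y) / (3*y) + sa x y * sb x y).

Definition pt : Type := (R * R * R * R)%type.

Definition ycoord (p : pt) : R := let '(_, _, y, _) := p in y.

(* Equilibrium of the Steiner drop system with parameter alpha0: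
   a point of the phase space {y > 0} where the vector field
   (w, f(x,y), z, h(x,y)) vanishes. *)
Definition equilibrium (alpha0 : R) (p : pt) : Prop :=
  let '(x, w, y, z) := p in
  0 < y /\ w = 0 /\ sf x y = 0 /\ z = 0 /\ sh alpha0 x y = 0.

Definition exactly_one_equilibrium (alpha0 : R) : Prop :=
  exists p, equilibrium alpha0 p /\ forall p', equilibrium alpha0 p' -> p' = p.

Definition exactly_two_equilibria (alpha0 : R) : Prop :=
  exists p1 p2, p1 <> p2 /\ equilibrium alpha0 p1 /\ equilibrium alpha0 p2 /\
    forall p, equilibrium alpha0 p -> p = p1 \/ p = p2.

Definition unimodal_at (s : R) : Prop :=
  (forall a b, 0 < a -> a < b -> b <= s -> q a < q b) /\
  (forall a b, s <= a -> a < b -> b < PI/2 -> q b < q a).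

Definition in_open_quarter (a : R) : Prop := 0 < a < PI/2.

(* Main.v *)
Require Import Defs.
From Stdlib Require Import Reals.
Open Scope R_scope.
From Stdlib Require Import Reals Lra Psatz.
From Coquelicot Require Import Coquelicot.
Definition Pc c := -c^3 + 4*c^2 + 6*c + 16.
Definition G c := (c^2-1)^5 / (c^8 * (4+c)^4).
Definition G' c := 2*(c^2-1)^4 * Pc c / (c^9 * (4+c)^5).
Lemma G_deriv c : 0 < c -> derivable_pt_lim G c (G' c).
Proof. intro Hc. apply is_derive_Reals. unfold G.
 auto_derive. { change (c^8 * (4+c)^4 <> 0). apply Rgt_not_eq. apply Rmult_lt_0_compat; apply pow_lt; lra. }
 unfold G', Pc. field. split; lra. Qed.

Lemma cstar_ex : {c | 11/2 <= c <= 6 /\ Pc c = 0}.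
Proof.
  destruct (IVT_cor Pc (11/2) 6) as [c [H1 H2]].
  - unfold Pc. reg.
  - lra.
  - unfold Pc. simpl. lra.
  - exists c; auto.
Qed.

Lemma Pc_sign cs c : 11/2 <= cs <= 6 -> Pc cs = 0 -> 1 <= c ->
  (c < cs -> 0 < Pc c) /\ (cs < c -> Pc c < 0).
Proof.
  intros Hcs Hp Hc.
  assert (E : Pc c = (c - cs) * (- (c*c + c*cs + cs*cs) + 4*(c + cs) + 6)).
  { rewrite <- (Rminus_0_r (Pc c)), <- Hp. unfold Pc. ring. }
  assert (Q : - (c*c + c*cs + cs*cs) + 4*(c + cs) + 6 < 0) by nra.
  rewrite E; split; intro; nra.
Qed.

Lemma G_incr cs a b : 11/2 <= cs <= 6 -> Pc cs = 0 -> 1 <= a -> a < b -> b <= cs -> G a < G b.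
Proof.
  intros Hcs Hp Ha Hab Hb.
  destruct (MVT_cor2 G G' a b Hab) as [x [E Hx]].
  { intros; apply G_deriv; lra. }
  assert (0 < G' x).
  { unfold G'. destruct (Pc_sign cs x Hcs Hp) as [P1 _]; [lra|].
    assert (0 < Pc x) by (apply P1; lra).
    apply Rdiv_lt_0_compat.
    - apply Rmult_lt_0_compat; [|auto]. apply Rmult_lt_0_compat; [lra|]. apply pow_lt; nra.
    - apply Rmult_lt_0_compat; apply pow_lt; lra. }
  nra.
Qed.

Lemma G_decr cs a b : 11/2 <= cs <= 6 -> Pc cs = 0 -> cs <= a -> a < b -> G b < G a.
Proof.
  intros Hcs Hp Ha Hab.
  destruct (MVT_cor2 G G' a b Hab) as [x [E Hx]].
  { intros; apply G_deriv; lra. }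
  assert (G' x < 0).
  { unfold G'. destruct (Pc_sign cs x Hcs Hp) as [_ P1]; [lra|].
    assert (Pc x < 0) by (apply P1; lra).
    unfold Rdiv. apply Rmult_neg_pos.
    - assert (0 < 2 * (x^2-1)^4) by (apply Rmult_lt_0_compat; [lra|]; apply pow_lt; nra). nra.
    - apply Rinv_0_lt_compat. apply Rmult_lt_0_compat; apply pow_lt; lra. }
  nra.
Qed.

Lemma G_cont c : 0 < c -> continuity_pt G c.
Proof. intro. apply derivable_continuous_pt. exists (G' c). now apply G_deriv. Qed.

Lemma G_pos c : 1 < c -> 0 < G c.
Proof. intro. unfold G. apply Rdiv_lt_0_compat. apply pow_lt; nra.
  apply Rmult_lt_0_compat; apply pow_lt; lra. Qed.

Lemma G_1 : G 1 = 0.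
Proof. unfold G. simpl. field. Qed.

Lemma G_ub c : 1 <= c -> G c <= / c.
Proof.
  intro Hc. unfold G.
  assert (H1 : (c^2-1)^5 <= c^10).
  { replace (c^10) with ((c^2)^5) by ring. apply pow_incr. nra. }
  assert (H2 : c^12 <= c^8 * (4+c)^4).
  { replace (c^12) with (c^8 * c^4) by ring. apply Rmult_le_compat_l. apply pow_le; lra.
    apply pow_incr; lra. }
  assert (H0 : 0 < c^12) by (apply pow_lt; lra).
  apply Rle_trans with (c^10 / c^12).
  - unfold Rdiv. apply Rmult_le_compat. apply pow_le; nra. left; apply Rinv_0_lt_compat; lra.
    auto. apply Rinv_le_contravar; auto.
  - replace (c^10/c^12) with (/c * /c) by (field; lra).
    assert (0 < /c) by (apply Rinv_0_lt_compat; lra).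
    assert (/c <= 1). { rewrite <- Rinv_1. apply Rinv_le_contravar; lra. } nra.
Qed.
Lemma G_inj_l cs a b : 11/2 <= cs <= 6 -> Pc cs = 0 -> 1 <= a <= cs -> 1 <= b <= cs -> G a = G b -> a = b.
Proof.
  intros Hcs Hp Ha Hb E. destruct (Rtotal_order a b) as [H|[H|H]]; auto.
  - pose proof (G_incr cs a b Hcs Hp); lra.
  - pose proof (G_incr cs b a Hcs Hp); lra.
Qed.

Lemma G_inj_r cs a b : 11/2 <= cs <= 6 -> Pc cs = 0 -> cs <= a -> cs <= b -> G a = G b -> a = b.
Proof.
  intros Hcs Hp Ha Hb E. destruct (Rtotal_order a b) as [H|[H|H]]; auto.
  - pose proof (G_decr cs a b Hcs Hp); lra.
  - pose proof (G_decr cs b a Hcs Hp); lra.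
Qed.

Lemma G_other_lt cs c0 : 11/2 <= cs <= 6 -> Pc cs = 0 -> 1 < c0 < cs ->
  exists c1, cs < c1 /\ G c1 = G c0.
Proof.
  intros Hcs Hp Hc0.
  pose proof (G_pos c0 ltac:(lra)) as Hg0.
  pose proof (G_incr cs c0 cs Hcs Hp ltac:(lra) ltac:(lra) ltac:(lra)) as Hgs.
  set (M := cs + / G c0 + 1).
  assert (HinvG : 0 < / G c0) by (apply Rinv_0_lt_compat; lra).
  assert (HM : G M < G c0).
  { pose proof (G_ub M ltac:(unfold M; lra)).
    assert (/ M < G c0).
    { assert (HM0 : / G c0 < M) by (unfold M; lra).
      pose proof (Rinv_lt_contravar (/ G c0) M ltac:(nra) HM0) as HH.
      rewrite Rinv_inv in HH. exact HH. }
    lra. }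
  destruct (Ranalysis5.IVT_interv (fun c => G c0 - G c) cs M) as [c [Hc E]].
  - intros a Ha. apply continuity_pt_minus. apply continuity_pt_const. intros u v; auto.
    apply G_cont; lra.
  - unfold M; lra.
  - lra.
  - lra.
  - exists c. split; [|lra]. destruct (Req_dec c cs); [subst; lra| lra].
Qed.

Lemma G_other_gt cs c0 : 11/2 <= cs <= 6 -> Pc cs = 0 -> cs < c0 ->
  exists c1, 1 < c1 < cs /\ G c1 = G c0.
Proof.
  intros Hcs Hp Hc0.
  pose proof (G_pos c0 ltac:(lra)) as Hg0.
  pose proof (G_decr cs cs c0 Hcs Hp ltac:(lra) ltac:(lra)) as Hgs.
  destruct (Ranalysis5.IVT_interv (fun c => G c - G c0) 1 cs) as [c [Hc E]].
  - intros a Ha. apply continuity_pt_minus. apply G_cont; lra.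
    apply continuity_pt_const. intros u v; auto.
  - lra.
  - rewrite G_1. lra.
  - lra.
  - exists c. split; [|lra]. split.
    + destruct (Req_dec c 1); [subst; rewrite G_1 in E; lra| lra].
    + destruct (Req_dec c cs); [subst; lra| lra].
Qed.
Lemma trig_facts a : 0 < a < PI/2 -> 0 < cos a < 1 /\ 0 < sin a.
Proof.
  intro H. pose proof PI_RGT_0.
  split; [split|].
  - apply cos_gt_0; lra.
  - rewrite <- cos_0. apply cos_decreasing_1; lra.
  - apply sin_gt_0; lra.
Qed.

Lemma q_sq a : 0 < a < PI/2 -> q a ^2 = 4 * sin a ^5 / (cos a * (4 + / cos a)^2).
Proof.
  intro H. destruct (trig_facts a H) as [[Hc Hc1] Hs].
  assert (Ht : 0 <= tan a) by (unfold tan; left; apply Rdiv_lt_0_compat; lra).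
  pose proof (sqrt_sqrt _ Ht) as Hr.
  assert (H4 : 0 < 4 + / cos a) by (pose proof (Rinv_0_lt_compat _ Hc); lra).
  unfold q.
  replace ((2 * sin a ^ 2 * sqrt (tan a) / (4 + / cos a)) ^ 2) with
    (4 * sin a ^4 * (sqrt (tan a) * sqrt (tan a)) / (4 + / cos a)^2) by (field; lra).
  rewrite Hr. unfold tan. field. lra.
Qed.

Lemma q_pos a : 0 < a < PI/2 -> 0 < q a.
Proof.
  intro H. destruct (trig_facts a H) as [[Hc Hc1] Hs].
  assert (Ht : 0 < tan a) by (unfold tan; apply Rdiv_lt_0_compat; lra).
  assert (H4 : 0 < 4 + / cos a) by (pose proof (Rinv_0_lt_compat _ Hc); lra).
  unfold q. apply Rdiv_lt_0_compat; auto. apply Rmult_lt_0_compat.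
  apply Rmult_lt_0_compat; [lra| apply pow_lt; lra]. apply sqrt_lt_R0; auto.
Qed.

Lemma q_4 a : 0 < a < PI/2 -> q a ^4 = 16 * G (/ cos a).
Proof.
  intro H. destruct (trig_facts a H) as [[Hc Hc1] Hs].
  assert (H4 : 0 < 4 + / cos a) by (pose proof (Rinv_0_lt_compat _ Hc); lra).
  assert (Hs2 : sin a ^2 = 1 - cos a ^2).
  { pose proof (sin2 a) as E. unfold Rsqr in E. simpl. lra. }
  replace (q a ^4) with ((q a^2)^2) by ring. rewrite (q_sq a H).
  replace ((4 * sin a ^ 5 / (cos a * (4 + / cos a) ^ 2)) ^ 2) with
    (16 * (sin a^2)^5 / (cos a ^2 * (4 + / cos a) ^ 4)) by (field; lra).
  rewrite Hs2. unfold G. field. split; try lra.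
Qed.

Lemma q_lt_of_G a b : 0 < a < PI/2 -> 0 < b < PI/2 -> G (/cos a) < G (/cos b) -> q a < q b.
Proof.
  intros Ha Hb HG. pose proof (q_4 a Ha). pose proof (q_4 b Hb).
  pose proof (q_pos a Ha). pose proof (q_pos b Hb).
  destruct (Rlt_le_dec (q a) (q b)) as [|Hle]; auto.
  assert (q b ^4 <= q a ^4) by (apply pow_incr; lra). lra.
Qed.

Lemma c_incr a b : 0 < a -> a < b -> b < PI/2 -> / cos a < / cos b.
Proof.
  intros. pose proof PI_RGT_0.
  destruct (trig_facts b ltac:(lra)) as [[Hc _] _].
  apply Rinv_lt_contravar. destruct (trig_facts a ltac:(lra)) as [[Hca _] _]. nra.
  apply cos_decreasing_1; lra.
Qed.

Lemma c_gt1 a : 0 < a < PI/2 -> 1 < / cos a.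
Proof.
  intro H. destruct (trig_facts a H) as [[Hc Hc1] _].
  rewrite <- Rinv_1. apply Rinv_lt_contravar; lra.
Qed.

Lemma q_sq_bounds a : 0 < a < PI/2 -> q a ^2 <= sin a /\ q a ^2 <= 4 * cos a.
Proof.
  intro H. destruct (trig_facts a H) as [[Hc Hc1] Hs]. rewrite (q_sq a H).
  pose proof (SIN_bound a) as [_ Hs1].
  replace (4 * sin a ^ 5 / (cos a * (4 + / cos a) ^ 2)) with
    (4 * sin a ^ 5 * cos a / (4 * cos a + 1) ^ 2) by (field; lra).
  assert (Hd : 0 < (4 * cos a + 1)^2) by (apply pow_lt; lra).
  assert (Hs4 : sin a ^4 <= 1). { rewrite <- (pow1 4). apply pow_incr; lra. }
  assert (Hs5 : 0 <= sin a ^5) by (apply pow_le; lra).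
  assert (K1 : cos a * sin a ^4 <= cos a) by nra.
  assert (K2 : 4 * cos a <= (4 * cos a + 1)^2) by nra.
  assert (K3 : sin a ^4 * sin a <= 1) by nra.
  split; apply Rle_div_l; auto.
  - replace (4 * sin a ^5 * cos a) with (sin a * (4 * (cos a * sin a ^4))) by ring.
    apply Rmult_le_compat_l; lra.
  - replace (4 * sin a ^5 * cos a) with (4 * cos a * (sin a ^4 * sin a)) by ring.
    assert (4 * cos a * (sin a ^4 * sin a) <= 4 * cos a * 1) by (apply Rmult_le_compat_l; lra).
    nra.
Qed.

Lemma q_lim0 : limit1_in q in_open_quarter 0 0.
Proof.
  intros eps Heps.
  destruct (continuity_sin 0 (eps*eps) ltac:(nra)) as [alp [Halp H]].
  exists alp; split; auto. intros x [Hx Hd].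
  assert (Hx' : 0 < x < PI/2) by exact Hx.
  specialize (H x). simpl in H, Hd |- *. unfold R_dist in H, Hd |- *.
  rewrite sin_0, Rminus_0_r, Rminus_0_r in H. rewrite Rminus_0_r in Hd |- *.
  assert (Hs : Rabs (sin x) < eps*eps) by (apply H; split; [split; [exact I| lra]| auto]).
  destruct (q_sq_bounds x Hx') as [B _]. pose proof (q_pos x Hx').
  rewrite (Rabs_pos_eq (q x)) by lra.
  rewrite Rabs_pos_eq in Hs by (destruct (trig_facts x Hx'); lra). nra.
Qed.

Lemma q_limPI2 : limit1_in q in_open_quarter 0 (PI/2).
Proof.
  intros eps Heps.
  destruct (continuity_cos (PI/2) (eps*eps/4) ltac:(nra)) as [alp [Halp H]].
  exists alp; split; auto. intros x [Hx Hd].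
  assert (Hx' : 0 < x < PI/2) by exact Hx.
  specialize (H x). simpl in H, Hd |- *. unfold R_dist in H, Hd |- *.
  rewrite cos_PI2, Rminus_0_r in H. rewrite Rminus_0_r.
  assert (Hs : Rabs (cos x) < eps*eps/4) by (apply H; split; [split; [exact I| lra]| auto]).
  destruct (q_sq_bounds x Hx') as [_ B]. pose proof (q_pos x Hx').
  rewrite (Rabs_pos_eq (q x)) by lra.
  rewrite Rabs_pos_eq in Hs by (destruct (trig_facts x Hx'); lra). nra.
Qed.
Lemma pow4_lt u v : 0 <= u -> u < v -> u^4 < v^4.
Proof. intros. assert (u*u < v*v) by nra. assert (0 <= u*u) by nra.
  replace (u^4) with ((u*u)*(u*u)) by ring. replace (v^4) with ((v*v)*(v*v)) by ring. nra. Qed.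

Lemma pow4_inj u v : 0 < u -> 0 < v -> u^4 = v^4 -> u = v.
Proof. intros H1 H2 H3. destruct (Rtotal_order u v) as [H|[H|H]]; auto.
  - pose proof (pow4_lt u v ltac:(lra) H); lra.
  - pose proof (pow4_lt v u ltac:(lra) H); lra. Qed.

Definition Cy y := sqrt (1 + (3*y)^4).

Lemma Cy_gt1 y : 0 < y -> 1 < Cy y.
Proof. intro. unfold Cy. rewrite <- sqrt_1 at 1. apply sqrt_lt_1; try lra.
  assert (0 < (3*y)^4) by (apply pow_lt; lra). lra.
  assert (0 < (3*y)^4) by (apply pow_lt; lra). lra. Qed.

Lemma Cy_incr y1 y2 : 0 < y1 -> y1 < y2 -> Cy y1 < Cy y2.
Proof. intros. unfold Cy. pose proof (pow4_lt (3*y1) (3*y2) ltac:(lra) ltac:(lra)).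
  assert (0 < (3*y1)^4) by (apply pow_lt; lra).
  apply sqrt_lt_1; lra. Qed.

Lemma Cy_inj y1 y2 : 0 < y1 -> 0 < y2 -> Cy y1 = Cy y2 -> y1 = y2.
Proof. intros H1 H2 H3. destruct (Rtotal_order y1 y2) as [H|[H|H]]; auto.
  - pose proof (Cy_incr y1 y2); lra.
  - pose proof (Cy_incr y2 y1); lra. Qed.

Lemma Cy_sq y : Cy y ^2 = 1 + (3*y)^4.
Proof. unfold Cy. rewrite <- Rsqr_pow2. apply Rsqr_sqrt.
  assert (0 <= (3*y)^4) by (replace ((3*y)^4) with (((3*y)^2)^2) by ring; apply pow2_ge_0). lra. Qed.

Lemma Cy_surj c : 1 < c -> exists y, 0 < y /\ Cy y = c.
Proof.
  intro Hc. exists (sqrt (sqrt (c^2-1)) / 3).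
  assert (H0 : 0 < c^2 - 1) by nra.
  assert (H1 : 0 < sqrt (c^2-1)) by (apply sqrt_lt_R0; auto).
  assert (H2 : 0 < sqrt (sqrt (c^2-1))) by (apply sqrt_lt_R0; auto).
  split; [lra|]. unfold Cy.
  replace (3 * (sqrt (sqrt (c ^ 2 - 1)) / 3)) with (sqrt (sqrt (c ^ 2 - 1))) by field.
  replace (sqrt (sqrt (c ^ 2 - 1)) ^4) with
    ((sqrt (sqrt (c ^ 2 - 1)) * sqrt (sqrt (c ^ 2 - 1))) *
     (sqrt (sqrt (c ^ 2 - 1)) * sqrt (sqrt (c ^ 2 - 1)))) by ring.
  rewrite sqrt_sqrt by lra. rewrite sqrt_sqrt by lra.
  replace (1 + (c^2-1)) with (c^2) by ring. apply sqrt_pow2. lra.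
Qed.

Lemma Cy_special a : 0 < a < PI/2 -> Cy (sqrt (tan a) / 3) = / cos a.
Proof.
  intro H. destruct (trig_facts a H) as [[Hc Hc1] Hs].
  assert (Ht : 0 <= tan a) by (unfold tan; left; apply Rdiv_lt_0_compat; lra).
  assert (Hs2 : sin a ^2 = 1 - cos a ^2).
  { pose proof (sin2 a) as E. unfold Rsqr in E. simpl. lra. }
  unfold Cy.
  replace (3 * (sqrt (tan a) / 3)) with (sqrt (tan a)) by field.
  replace (sqrt (tan a) ^4) with
    ((sqrt (tan a) * sqrt (tan a)) * (sqrt (tan a) * sqrt (tan a))) by ring.
  rewrite sqrt_sqrt by lra.
  replace (1 + tan a * tan a) with ((/ cos a)^2).
  - apply sqrt_pow2. left; apply Rinv_0_lt_compat; lra.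
  - unfold tan. replace (sin a / cos a * (sin a / cos a)) with (sin a ^2 / cos a ^2) by (field; lra).
    rewrite Hs2. field. lra.
Qed.

Lemma sf_zero x y : 0 < y -> sf x y = 0 -> x = 0.
Proof.
  intros Hy E. unfold sf, sa, sb in E.
  set (u := / (3*y) - 3*x) in *. set (v := / (3*y) + 3*x) in *.
  set (k := 9*y^2) in *.
  assert (Hk : 0 < k) by (unfold k; nra).
  assert (HA : 0 < u^2 + k) by nra. assert (HB : 0 < v^2 + k) by nra.
  pose proof (sqrt_lt_R0 _ HA) as A0. pose proof (sqrt_lt_R0 _ HB) as B0.
  pose proof (sqrt_sqrt _ (Rlt_le _ _ HA)) as A2. pose proof (sqrt_sqrt _ (Rlt_le _ _ HB)) as B2.
  set (A := sqrt (u^2+k)) in *. set (B := sqrt (v^2+k)) in *.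
  assert (E1 : u * B = v * A).
  { apply (f_equal (fun z => z * A * B)) in E.
    replace ((/ A * u - / B * v) * A * B) with (u * B - v * A) in E by (field; lra). lra. }
  assert (E2 : u*u = v*v).
  { assert (u*u*(B*B) = v*v*(A*A)) by (replace (u*u*(B*B)) with ((u*B)*(u*B)) by ring; rewrite E1; ring).
    rewrite A2, B2 in H. assert (k*(u*u - v*v) = 0) by nra.
    apply Rmult_integral in H0. destruct H0; lra. }
  assert (Euv : u = v).
  { assert ((u - v)*(u+v) = 0) by nra. apply Rmult_integral in H. destruct H; [lra|].
    assert (u*(A+B) = 0) by nra. apply Rmult_integral in H0. destruct H0; lra. }
  unfold u, v in Euv. lra.
Qed.

Lemma sa_sb_0 y : 0 < y -> sa 0 y = Cy y / (3*y) /\ sb 0 y = Cy y / (3*y).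
Proof.
  intro Hy. assert (HC : 1 < Cy y) by (apply Cy_gt1; auto). pose proof (Cy_sq y) as HC2.
  assert (E : (/ (3*y))^2 + 9*y^2 = (Cy y / (3*y))^2).
  { replace ((Cy y / (3*y))^2) with (Cy y ^2 / (3*y)^2) by (field; lra). rewrite HC2. field. lra. }
  unfold sa, sb. replace (/ (3*y) - 3*0) with (/ (3*y)) by ring.
  replace (/ (3*y) + 3*0) with (/ (3*y)) by ring. rewrite E.
  rewrite sqrt_pow2. auto. left; apply Rdiv_lt_0_compat; lra.
Qed.

Lemma sh_0 a y : 0 < a < PI/2 -> 0 < y -> (sh a 0 y = 0 <-> G (Cy y) = G (/ cos a)).
Proof.
  intros Ha Hy. destruct (sa_sb_0 y Hy) as [E1 E2].
  assert (HC : 1 < Cy y) by (apply Cy_gt1; auto). pose proof (Cy_sq y) as HC2.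
  set (C := Cy y) in *. set (t := 3*y).
  set (g := 2 * t^5 / (C^2 * (4 + C))).
  assert (Ht : 0 < t) by (unfold t; lra).
  assert (Esh : sh a 0 y = (C * (4 + C) / t^3) * (q a - g)).
  { unfold sh. rewrite E1, E2. unfold g, t. field. lra. }
  assert (Hg : 0 < g) by (unfold g; apply Rdiv_lt_0_compat; [apply Rmult_lt_0_compat; [lra| apply pow_lt; lra]
     | apply Rmult_lt_0_compat; [apply pow_lt|]; lra]).
  assert (Hg4 : g^4 = 16 * G C).
  { unfold g, G. replace (C^2-1) with (t^4) by (rewrite HC2; unfold t; ring). field. lra. }
  assert (Hf : 0 < C * (4 + C) / t^3) by (apply Rdiv_lt_0_compat; [nra| apply pow_lt; lra]).
  pose proof (q_4 a Ha) as Hq4. pose proof (q_pos a Ha) as Hq.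
  rewrite Esh. split; intro H.
  - apply Rmult_integral in H. destruct H as [H|H]; [lra|].
    assert (q a = g) by lra. assert (q a ^4 = g^4) by (rewrite H0; auto). lra.
  - assert (q a ^4 = g^4) by lra. apply pow4_inj in H0; auto. rewrite H0. ring.
Qed.
Lemma eq_char a x w y z : 0 < a < PI/2 ->
  (equilibrium a (x,w,y,z) <-> 0 < y /\ w = 0 /\ x = 0 /\ z = 0 /\ G (Cy y) = G (/ cos a)).
Proof.
  intro Ha. unfold equilibrium. split.
  - intros [Hy [Hw [Hf [Hz Hh]]]]. pose proof (sf_zero x y Hy Hf). subst x.
    repeat split; auto. apply (sh_0 a y Ha Hy). auto.
  - intros [Hy [Hw [Hx [Hz HG]]]]. subst x. repeat split; auto.
    + unfold sf. destruct (sa_sb_0 y Hy) as [E1 E2]. rewrite E1, E2. ring.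
    + apply (sh_0 a y Ha Hy). auto.
Qed.

Lemma G_one cs c : 11/2 <= cs <= 6 -> Pc cs = 0 -> 1 < c -> G c = G cs -> c = cs.
Proof.
  intros Hcs Hp Hc E. destruct (Rle_lt_dec c cs).
  - apply (G_inj_l cs); auto; lra.
  - apply (G_inj_r cs); auto; lra.
Qed.

Lemma G_two cs c0 : 11/2 <= cs <= 6 -> Pc cs = 0 -> 1 < c0 -> c0 <> cs ->
  exists c1, 1 < c1 /\ c1 <> c0 /\ G c1 = G c0 /\ (c0 < cs -> cs < c1) /\ (cs < c0 -> c1 < cs) /\
   forall c, 1 < c -> G c = G c0 -> c = c0 \/ c = c1.
Proof.
  intros Hcs Hp Hc0 Hne. destruct (Rtotal_order c0 cs) as [Hl|[He|Hg]]; [|contradiction|].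
  - destruct (G_other_lt cs c0 Hcs Hp ltac:(lra)) as [c1 [H1 E1]].
    exists c1. repeat split; try lra.
    intros c Hc E. destruct (Rle_lt_dec c cs).
    + left. apply (G_inj_l cs); auto; lra.
    + right. apply (G_inj_r cs); auto; lra.
  - destruct (G_other_gt cs c0 Hcs Hp ltac:(lra)) as [c1 [H1 E1]].
    exists c1. repeat split; try lra.
    intros c Hc E. destruct (Rle_lt_dec c cs).
    + right. apply (G_inj_l cs); auto; lra.
    + left. apply (G_inj_r cs); auto; lra.
Qed.

Lemma c_le a b : 0 < a -> a <= b -> b < PI/2 -> / cos a <= / cos b.
Proof. intros. destruct H0. left; apply c_incr; auto. subst; lra. Qed.

Theorem mainTheorem3 :
  limit1_in q in_open_quarter 0 0 /\
  limit1_in q in_open_quarter 0 (PI/2) /\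
  exists s : R,
    0 < s < PI/2 /\ unimodal_at s /\
    (forall s', 0 < s' < PI/2 -> unimodal_at s' -> s' = s) /\
    forall alpha0 : R, 0 < alpha0 < PI/2 ->
      (alpha0 <> s -> exactly_two_equilibria alpha0) /\
      (alpha0 = s -> exactly_one_equilibrium alpha0) /\
      (alpha0 < s ->
         equilibrium alpha0 (0, 0, sqrt (tan alpha0) / 3, 0) /\
         forall p, equilibrium alpha0 p -> p <> (0, 0, sqrt (tan alpha0) / 3, 0) ->
           sqrt (tan alpha0) / 3 < ycoord p) /\
      (s < alpha0 ->
         equilibrium alpha0 (0, 0, sqrt (tan alpha0) / 3, 0) /\
         forall p, equilibrium alpha0 p -> p <> (0, 0, sqrt (tan alpha0) / 3, 0) ->
           ycoord p < sqrt (tan alpha0) / 3).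
Proof.
  split; [exact q_lim0|]. split; [exact q_limPI2|].
  destruct cstar_ex as [cs [Hcs Hp]].
  pose proof PI_RGT_0 as HPI.
  destruct (IVT_cor (fun a => cos a - / cs) 0 (PI/2)) as [s [Hs Es]].
  { intro x. apply continuity_pt_minus. apply continuity_cos.
    apply continuity_pt_const. intros u v; auto. }
  { lra. }
  { rewrite cos_0, cos_PI2. assert (0 < /cs) by (apply Rinv_0_lt_compat; lra).
    assert (/cs < 1) by (rewrite <- Rinv_1; apply Rinv_lt_contravar; lra). nra. }
  simpl in Es.
  assert (Hcs0 : 0 < /cs) by (apply Rinv_0_lt_compat; lra).
  assert (Hcs1 : /cs < 1) by (rewrite <- Rinv_1; apply Rinv_lt_contravar; lra).
  assert (Hs' : 0 < s < PI/2).
  { split; destruct Hs as [H1 H2]; destruct H1 as [H1|H1]; destruct H2 as [H2|H2]; auto; subst;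
    try rewrite cos_0 in Es; try rewrite cos_PI2 in Es; try rewrite <- H2 in Es;
    try rewrite <- H1 in Es; try rewrite cos_0 in Es; try rewrite cos_PI2 in Es; lra. }
  assert (Ecs : / cos s = cs) by (replace (cos s) with (/cs) by lra; apply Rinv_inv).
  clear Hs Es.
  assert (Hlt : forall a, 0 < a < PI/2 -> a < s -> / cos a < cs).
  { intros a Ha H. rewrite <- Ecs. apply c_incr; lra. }
  assert (Hgt : forall a, 0 < a < PI/2 -> s < a -> cs < / cos a).
  { intros a Ha H. rewrite <- Ecs. apply c_incr; lra. }
  assert (Hun : unimodal_at s).
  { split.
    - intros a b Ha Hab Hb. apply q_lt_of_G; try lra.
      apply (G_incr cs); auto.
      + left; apply c_gt1; lra.
      + apply c_incr; lra.
      + rewrite <- Ecs. apply c_le; lra.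
    - intros a b Ha Hab Hb. apply q_lt_of_G; try lra.
      apply (G_decr cs); auto.
      + rewrite <- Ecs. apply c_le; lra.
      + apply c_incr; lra. }
  exists s. split; [auto|]. split; [auto|]. split.
  { intros s' Hs'' [U1 U2]. destruct Hun as [V1 V2].
    destruct (Rtotal_order s' s) as [H|[H|H]]; auto.
    - pose proof (U2 s' s ltac:(lra) H ltac:(lra)). pose proof (V1 s' s ltac:(lra) H ltac:(lra)). lra.
    - pose proof (V2 s s' ltac:(lra) H ltac:(lra)). pose proof (U1 s s' ltac:(lra) H ltac:(lra)). lra. }
  intros a Ha.
  set (c0 := / cos a).
  set (y0 := sqrt (tan a) / 3).
  assert (Hc0 : 1 < c0) by (apply c_gt1; auto).
  assert (Hy0 : 0 < y0).
  { destruct (trig_facts a Ha) as [[Hc _] Hsn]. unfold y0.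
    assert (0 < sqrt (tan a)) by (apply sqrt_lt_R0; unfold tan; apply Rdiv_lt_0_compat; lra). lra. }
  assert (Cy0 : Cy y0 = c0) by (apply Cy_special; auto).
  assert (Hp0 : equilibrium a (0,0,y0,0)).
  { apply eq_char; auto. repeat split; auto. rewrite Cy0. reflexivity. }
  assert (Hall : forall p, equilibrium a p -> exists y, p = (0,0,y,0) /\ 0 < y /\ G (Cy y) = G c0).
  { intros [[[x w] y] z] Hq. apply eq_char in Hq; auto. destruct Hq as [Hy [Hw [Hx [Hz HG]]]].
    subst. exists y; auto. }
  assert (Hne : a <> s -> c0 <> cs).
  { intros H E. destruct (Rtotal_order a s) as [H1|[H1|H1]]; auto.
    - pose proof (Hlt a Ha H1). unfold c0 in E. lra.
    - pose proof (Hgt a Ha H1). unfold c0 in E. lra. }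
  assert (Two : a <> s -> exists c1 y1, 0 < y1 /\ Cy y1 = c1 /\ G c1 = G c0 /\ c1 <> c0 /\
     (c0 < cs -> cs < c1) /\ (cs < c0 -> c1 < cs) /\
     forall p, equilibrium a p -> p = (0,0,y0,0) \/ p = (0,0,y1,0)).
  { intro H. destruct (G_two cs c0 Hcs Hp Hc0 (Hne H)) as [c1 [H1 [H2 [H3 [H4 [H5 H6]]]]]].
    destruct (Cy_surj c1 H1) as [y1 [Hy1 Ey1]].
    exists c1, y1. repeat split; auto.
    intros p Hq. destruct (Hall p Hq) as [y [Ep [Hy HG]]]. subst p.
    destruct (H6 (Cy y) (Cy_gt1 y Hy) HG) as [E|E].
    - left. rewrite <- Cy0 in E. apply Cy_inj in E; auto. subst; auto.
    - right. rewrite <- Ey1 in E. apply Cy_inj in E; auto. subst; auto. }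
  split; [|split; [|split]].
  - intro H. destruct (Two H) as [c1 [y1 [Hy1 [Ey1 [HG1 [Hn1 [_ [_ Hq]]]]]]]].
    exists (0,0,y0,0), (0,0,y1,0). split; [|split; [exact Hp0|split; [|exact Hq]]].
    + intro E. inversion E. subst. lra.
    + apply eq_char; auto. repeat split; auto. rewrite Ey1; auto.
  - intro H. exists (0,0,y0,0). split; auto. intros p Hq.
    destruct (Hall p Hq) as [y [Ep [Hy HG]]]. subst p.
    assert (c0 = cs) by (unfold c0; subst; auto).
    rewrite H0 in HG. apply (G_one cs) in HG; auto; [|apply Cy_gt1; auto].
    rewrite <- H0, <- Cy0 in HG. apply Cy_inj in HG; auto. subst; auto.
  - intro H. split; [exact Hp0|].
    destruct (Two ltac:(lra)) as [c1 [y1 [Hy1 [Ey1 [HG1 [Hn1 [Hc1 [_ Hq]]]]]]]].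
    intros p Hq' Hn. destruct (Hq p Hq') as [E|E]; [contradiction|]. subst p. simpl.
    pose proof (Hc1 (Hlt a Ha H)). pose proof (Hlt a Ha H).
    destruct (Rlt_le_dec y0 y1) as [|Hle]; auto.
    destruct Hle as [Hle|Hle]; [pose proof (Cy_incr y1 y0 Hy1 Hle); unfold c0 in *; lra|subst y1; exfalso; apply Hn; reflexivity].
  - intro H. split; [exact Hp0|].
    destruct (Two ltac:(lra)) as [c1 [y1 [Hy1 [Ey1 [HG1 [Hn1 [_ [Hc1 Hq]]]]]]]].
    intros p Hq' Hn. destruct (Hq p Hq') as [E|E]; [contradiction|]. subst p. simpl.
    pose proof (Hc1 (Hgt a Ha H)). pose proof (Hgt a Ha H).
    destruct (Rlt_le_dec y1 y0) as [|Hle]; auto.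
    destruct Hle as [Hle|Hle]; [pose proof (Cy_incr y0 y1 Hy0 Hle); unfold c0 in *; lra|subst y1; exfalso; apply Hn; reflexivity].
Qed.
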